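(* Let $a$ be a function of two variables, and let $f,\tilde f,g,\tilde g,h,\tilde h$ be functions of two variables. Let $q(n_1,n_2;x)$, $(n_1,n_2)\in\mathbb Z^2$, be a function such that for every $x$ it satisfies the 7-point equation $$f(q,q_{1,0})-\tilde f(q,q_{-1,0})+g(q,q_{0,1})-\tilde g(q,q_{0,-1})+h(q,q_{-1,-1})-\tilde h(q,q_{1,1})=0$$ at every site, and such that at every site $$q_{,x}=a\bigl(q,\,f(q,q_{1,0})-\tilde g(q,q_{0,-1})-\tilde h(q,q_{1,1})\bigr)$$ (by the 7-point equation, equivalently $q_{,x}=a\bigl(q,\,\tilde f(q,q_{-1,0})-g(q,q_{0,1})-h(q,q_{-1,-1})\bigr)$). Fix an integer $j$. (i) The functions $q(k)=q(j,k)$, $p(k)=q(j+1,k)$ of $k\in\mathbb Z$ satisfy $$q_{,x}=a\bigl(q,f(q,p)-\tilde g(q,q_{-1})-\tilde h(q,p_1)\bigr),\qquad p_{,x}=a\bigl(p,\tilde f(p,q)-g(p,p_1)-h(p,q_{-1})\bigr).$$ (ii) The functions $q(k)=q(-k,j-k)$, $p(k)=q(1-k,j-k)$ of $k\in\mathbb Z$ satisfy $$q_{,x}=a\bigl(q,f(q,p)-\tilde g(q,p_1)-\tilde h(q,q_{-1})\bigr),\qquad p_{,x}=a\bigl(p,\tilde f(p,q)-g(p,q_{-1})-h(p,p_1)\bigr).$$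
   Context: Notation: $q_{i,j}=q(n_1+i,n_2+j)$ for the two-dimensional lattice function, and for one-index sequences $q_m=q(k+m)$, $p_m=p(k+m)$, with $q=q(k)$, $p=p(k)$. Subscript ${,x}$ denotes the derivative with respect to $x$. *)

(* Defs.v *)
From Stdlib Require Export Reals ZArith.
Open Scope R_scope.

Definition has_deriv (u : R -> R) (x v : R) : Prop := derivable_pt_lim u x v.

(* Main.v *)
Require Import Defs.
Open Scope R_scope.
From Stdlib Require Import Lra.
Lemma derivable_pt_lim_eq_val (u : R -> R) x v w : has_deriv u x v -> v = w -> has_deriv u x w.
Proof. intros H ->; exact H. Qed.

Theorem mainTheorem1
  (a f ft g gt h ht : R -> R -> R) (q : Z -> Z -> R -> R)
  (H7 : forall (n1 n2 : Z) (x : R),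
     f (q n1 n2 x) (q (n1 + 1)%Z n2 x) - ft (q n1 n2 x) (q (n1 - 1)%Z n2 x)
   + g (q n1 n2 x) (q n1 (n2 + 1)%Z x) - gt (q n1 n2 x) (q n1 (n2 - 1)%Z x)
   + h (q n1 n2 x) (q (n1 - 1)%Z (n2 - 1)%Z x) - ht (q n1 n2 x) (q (n1 + 1)%Z (n2 + 1)%Z x) = 0)
  (Hx : forall (n1 n2 : Z) (x : R),
     has_deriv (fun y => q n1 n2 y) x
       (a (q n1 n2 x)
          (f (q n1 n2 x) (q (n1 + 1)%Z n2 x) - gt (q n1 n2 x) (q n1 (n2 - 1)%Z x)
           - ht (q n1 n2 x) (q (n1 + 1)%Z (n2 + 1)%Z x))))
  (j : Z) :
  (* (i): q(k) = q(j,k), p(k) = q(j+1,k) *)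
  (let qq := fun (k : Z) (x : R) => q j k x in
   let pp := fun (k : Z) (x : R) => q (j + 1)%Z k x in
   forall (k : Z) (x : R),
     has_deriv (qq k) x
       (a (qq k x) (f (qq k x) (pp k x) - gt (qq k x) (qq (k - 1)%Z x)
                    - ht (qq k x) (pp (k + 1)%Z x)))
     /\ has_deriv (pp k) x
       (a (pp k x) (ft (pp k x) (qq k x) - g (pp k x) (pp (k + 1)%Z x)
                    - h (pp k x) (qq (k - 1)%Z x))))
  /\
  (* (ii): q(k) = q(-k, j-k), p(k) = q(1-k, j-k) *)
  (let qq := fun (k : Z) (x : R) => q (- k)%Z (j - k)%Z x in
   let pp := fun (k : Z) (x : R) => q (1 - k)%Z (j - k)%Z x in
   forall (k : Z) (x : R),
     has_deriv (qq k) x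
       (a (qq k x) (f (qq k x) (pp k x) - gt (qq k x) (pp (k + 1)%Z x)
                    - ht (qq k x) (qq (k - 1)%Z x)))
     /\ has_deriv (pp k) x
       (a (pp k x) (ft (pp k x) (qq k x) - g (pp k x) (qq (k - 1)%Z x)
                    - h (pp k x) (pp (k + 1)%Z x)))).
Proof.
  split.
  - intros qq pp k x; unfold qq, pp; split.
    + apply Hx.
    + eapply derivable_pt_lim_eq_val; [apply (Hx (j+1)%Z k x)|].
      f_equal. pose proof (H7 (j+1)%Z k x) as E.
      replace (j + 1 - 1)%Z with j in E by ring. lra.
  - intros qq pp k x; unfold qq, pp; split.
    + eapply derivable_pt_lim_eq_val; [apply (Hx (-k)%Z (j-k)%Z x)|].
      replace (1 - (k + 1))%Z with (-k)%Z by ring.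
      replace (j - (k + 1))%Z with (j - k - 1)%Z by ring.
      replace (- (k - 1))%Z with (-k + 1)%Z by ring.
      replace (j - (k - 1))%Z with (j - k + 1)%Z by ring.
      replace (1 - k)%Z with (-k + 1)%Z by ring. reflexivity.
    + eapply derivable_pt_lim_eq_val; [apply (Hx (1-k)%Z (j-k)%Z x)|].
      f_equal. pose proof (H7 (1-k)%Z (j-k)%Z x) as E.
      replace (- (k - 1))%Z with (1 - k)%Z by ring.
      replace (j - (k - 1))%Z with (j - k + 1)%Z by ring.
      replace (1 - (k + 1))%Z with (1 - k - 1)%Z by ring.
      replace (j - (k + 1))%Z with (j - k - 1)%Z by ring.
      replace (1 - k - 1)%Z with (-k)%Z in E at 1 by ring. lra.
Qed.
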